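(* Let $p$ be an odd prime and let $r\in\{2,3,\dots,p-1\}$ be a primitive root modulo $p$. (1) If $p\equiv1\pmod4$, then at least one of $r$ and $p-r$ is a primitive root modulo $p^2$. (2) If $p\equiv3\pmod4$, let $s\in\{1,\dots,p-1\}$ be the integer with $s\equiv -r^2\pmod p$. Then at least one of $r$ and $s$ is a primitive root modulo $p^2$.
   Context: An integer $r$ is a primitive root modulo $m$ if $\gcd(r,m)=1$ and the multiplicative order of $r$ modulo $m$ equals $\varphi(m)$, where $\varphi$ is Euler's totient function. *)

(* Defs.v *)
From mathcomp Require Import all_boot.
Set Implicit Arguments. Unset Strict Implicit. Unset Printing Implicit Defensive.

Definition is_mult_order (m r k : nat) : Prop :=
  [/\ 0 < k, r ^ k = 1 %[mod m]
    & forall j, 0 < j -> r ^ j = 1 %[mod m] -> k <= j].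

Definition primitive_root (m r : nat) : Prop :=
  coprime r m /\ is_mult_order m r (totient m).

(* Main.v *)
Require Import Defs.
From mathcomp Require Import all_boot all_order all_algebra all_fingroup all_solvable.
Set Implicit Arguments. Unset Strict Implicit. Unset Printing Implicit Defensive.
Import GRing.Theory.

Lemma pow_gcd m a x y : a ^ x = 1 %[mod m] -> a ^ y = 1 %[mod m] ->
  a ^ (gcdn x y) = 1 %[mod m].
Proof.
elim: x {-2}x (leqnn x) y => [|n IH] x Hx y.
  by move: Hx; rewrite leqn0 => /eqP -> _; rewrite gcd0n.
move=> Hax Hay.
case: (posnP x) => [->|xpos]; first by rewrite gcd0n.
rewrite -gcdn_modr.
have Hm : a ^ (y %% x) = 1 %[mod m].
  have E : (a ^ x) ^ (y %/ x) = 1 %[mod m] by rewrite -modnXm Hax modnXm exp1n.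
  move: Hay; rewrite {1}(divn_eq y x) expnD (mulnC (y %/ x)) expnM -modnMml E modnMml mul1n.
  by [].
rewrite gcdnC; apply: IH => //.
by rewrite -ltnS (leq_trans (ltn_pmod y xpos) Hx).
Qed.

Lemma order_dvd m a k j : is_mult_order m a k -> a ^ j = 1 %[mod m] -> k %| j.
Proof.
case=> kpos Hk Hmin Hj.
have Hg := pow_gcd Hk Hj.
have gpos : 0 < gcdn k j by rewrite gcdn_gt0 kpos.
have := Hmin _ gpos Hg => Hle.
have : gcdn k j == k by rewrite eqn_leq Hle dvdn_leq // dvdn_gcdl.
by move/eqP => <-; rewrite dvdn_gcdr.
Qed.

Lemma modZ m a b : 1 < m -> (a = b %[mod m]) <-> ((a%:R : 'Z_m) = b%:R)%R.
Proof.
move=> Hm; split => H.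
  by rewrite -(Zp_nat_mod Hm) H Zp_nat_mod.
by move: (congr1 (@nat_of_ord _) H); rewrite !val_Zp_nat.
Qed.

Lemma modZ0 m a : 1 < m -> (m %| a) <-> ((a%:R : 'Z_m) = 0)%R.
Proof.
move=> Hm; rewrite /dvdn; split=> H.
  have [h _] := modZ a 0 Hm; rewrite h //; by rewrite (eqP H) mod0n.
have [_ h] := modZ a 0 Hm; apply/eqP; rewrite -[RHS](mod0n m); apply: h; exact: H.
Qed.

Lemma pm1_gt0 p : prime p -> 0 < p.-1.
Proof. by move/prime_gt1; case: p => [|[|q]]. Qed.

Lemma dvd_p2 p : p %| p ^ 2.
Proof. by rewrite (expnS p 1) dvdn_mulr. Qed.

Lemma liftA p a : prime p -> primitive_root p a ->
  ~ (a ^ p.-1 = 1 %[mod p ^ 2]) -> primitive_root (p ^ 2) a.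
Proof.
move=> pp [cop ord] Hn.
have pm1 := pm1_gt0 pp.
have tot : totient (p ^ 2) = p.-1 * p by rewrite totient_pfactor // expn1.
rewrite (totient_prime pp) in ord.
have cop2 : coprime a (p ^ 2) by rewrite coprime_pexpr.
split => //; rewrite tot; split.
- by rewrite muln_gt0 pm1 prime_gt0.
- by rewrite -tot Euler_exp_totient.
move=> j jpos Hj.
set g := gcdn j (p.-1 * p).
have Hg : a ^ g = 1 %[mod p ^ 2] by apply: pow_gcd => //; rewrite -tot Euler_exp_totient.
have Hgp : a ^ g = 1 %[mod p] by rewrite -(modn_dvdm _ (dvd_p2 p)) Hg modn_dvdm // dvd_p2.
have d1 : p.-1 %| g by apply: (order_dvd ord).
have d2 : g %| p.-1 * p by exact: dvdn_gcdr.
case/dvdnP: d1 => u gu.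
rewrite gu mulnC dvdn_pmul2l // in d2.
case/primeP: pp => _ /(_ u d2) /orP [] /eqP ue.
  by exfalso; apply: Hn; rewrite -(_ : g = p.-1) // gu ue mul1n.
by apply: dvdn_leq => //; rewrite (_ : p.-1 * p = g) ?dvdn_gcdl // gu ue mulnC.
Qed.

Lemma cop_small p a : prime p -> 0 < a < p -> coprime a p.
Proof.
move=> pp /andP [a0 ap]; rewrite coprime_sym prime_coprime //.
by apply/negP => /(dvdn_leq a0); rewrite leqNgt ap.
Qed.

Open Scope ring_scope.

Lemma B1 p r : prime p -> (p %% 4 = 1)%N -> primitive_root p r -> (0 < r < p)%N ->
  primitive_root p (p - r).
Proof.
move=> pp H4 [cop ord] /andP [r0 rp].
have p1 := prime_gt1 pp.
have Hrp : (r <= p)%N by exact: ltnW.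
have Ep : p.-1 = (2 * (2 * (p %/ 4)))%N.
  by rewrite {1}(divn_eq p 4) H4 addn1 /= mulnA mulnC.
split.
  by apply: cop_small => //; rewrite subn_gt0 rp ltn_subrL r0 prime_gt0.
rewrite totient_prime // in ord *.
have [o1 o2 o3] := ord.
split => //.
  by rewrite -(totient_prime pp); apply: Euler_exp_totient; apply: cop_small => //; rewrite subn_gt0 rp ltn_subrL r0 prime_gt0.
move=> j j0 /(modZ _ _ p1); rewrite natrX natrB // (pchar_Zp p1) sub0r => Hj.
have H2 : (r ^ (2 * j) = 1 %[mod p])%N.
  apply/(modZ _ _ p1); rewrite natrX exprM -sqrrN -exprM mulnC exprM Hj expr1n //.
have : (2 * (2 * (p %/ 4)) %| 2 * j)%N by rewrite -Ep; exact: order_dvd ord H2.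
rewrite dvdn_pmul2l // => /(dvdn_trans (dvdn_mulr _ (dvdnn 2))).
case/dvdnP => i Ei.
apply: o3 => //; apply/(modZ _ _ p1).
by rewrite natrX Ei mulnC exprM -sqrrN -exprM mulnC -Ei Hj.
Qed.

Lemma exprN_odd (R : pzRingType) (x : R) n : odd n -> (- x) ^+ n = - x ^+ n.
Proof. by move=> Ho; rewrite exprNn -signr_odd Ho expr1 mulN1r. Qed.

Lemma B2 p r s : prime p -> (p %% 4 = 3)%N -> primitive_root p r -> (0 < s < p)%N ->
  ((s + r ^ 2) %% p = 0)%N -> primitive_root p s.
Proof.
move=> pp H4 [cop ord] sb Hs.
have p1 := prime_gt1 pp.
have p3 : (3 <= p)%N by rewrite -{1}H4 leq_mod.
set t := (p %/ 4)%N.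
have Ep : p.-1 = (2 * (2 * t + 1))%N.
  rewrite {1}(divn_eq p 4) H4 addnS /= mulnDr muln1 mulnA (mulnC t 4) //.
have cop2 : coprime (2 * t + 1) 2 by rewrite coprimen2 oddD oddM.
have HS : (s%:R : 'Z_p) = - (r%:R) ^+ 2.
  have : (p %| s + r ^ 2)%N by rewrite /dvdn Hs.
  by move/(modZ0 _ p1); rewrite natrD natrX => /eqP; rewrite addr_eq0 => /eqP.
rewrite totient_prime // in ord *.
have [o1 o2 o3] := ord.
have o2' : (r%:R : 'Z_p) ^+ p.-1 = 1 by move/(modZ _ _ p1): o2; rewrite natrX.
split; first exact: cop_small.
rewrite totient_prime //; split => //.
  by rewrite -(totient_prime pp); apply: Euler_exp_totient; apply: cop_small.
move=> j j0 /(modZ _ _ p1); rewrite natrX HS => Hj.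
have H2 : (r ^ (2 * (2 * j)) = 1 %[mod p])%N.
  apply/(modZ _ _ p1); rewrite natrX !exprM -sqrrN -exprM mulnC exprM Hj expr1n //.
have : (2 * (2 * t + 1) %| 2 * (2 * j))%N by rewrite -Ep; exact: order_dvd ord H2.
rewrite dvdn_pmul2l // Gauss_dvdr // => dj.
case oj: (odd j).
  exfalso.
  have : (- (r%:R : 'Z_p) ^+ 2) ^+ j = -1.
    rewrite exprN_odd // -exprM.
    case/dvdnP: dj => u ->.
    by rewrite mulnA (mulnC 2) -mulnA mulnC exprM -Ep o2' expr1n.
  rewrite Hj => /eqP; rewrite -subr_eq0 opprK => /eqP.
  rewrite -(natrD _ 1 1) => /(modZ0 _ p1) /(dvdn_leq (isT : (0 < 1 + 1)%N)).
  by rewrite leqNgt (leq_trans _ p3).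
apply: dvdn_leq => //; rewrite Ep Gauss_dvd; last by rewrite coprime2n oddD oddM.
by rewrite dj dvdn2 oj.
Qed.
Lemma binom_sq (R : comPzRingType) (P x y : R) n : P * P = 0 ->
  (x + P * y) ^+ n.+1 = x ^+ n.+1 + (P * y * x ^+ n) *+ n.+1.
Proof.
move=> PP; elim: n => [|n IH]; first by rewrite expr1 expr0 mulr1 mulr1n.
rewrite exprS IH mulrDl !mulrDr -exprS.
have T4 : P * y * (P * y * x ^+ n *+ n.+1) = 0.
  by rewrite mulrnAr mulrA mulrACA PP !mul0r mul0rn.
rewrite T4 addr0 mulrnAr mulrCA -exprS.
by rewrite -addrA [X in _ + X = _]addrC -mulrS.
Qed.

Lemma PP0 p : (1 < p)%N -> (p%:R : 'Z_(p ^ 2)) * p%:R = 0.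
Proof.
move=> p1; have p21 : (1 < p ^ 2)%N by rewrite -mulnn (leq_trans p1) // leq_pmulr // ltnW.
by rewrite -natrM mulnn (pchar_Zp p21).
Qed.

Lemma notdvd_small p a : (0 < a < p)%N -> ~~ (p %| a)%N.
Proof. by case/andP=> a0 ap; apply/negP => /(dvdn_leq a0); rewrite leqNgt ap. Qed.

Lemma C1 n r : prime n.+2 -> odd n.+2 -> (0 < r < n.+2)%N ->
  (r ^ n.+1 = 1 %[mod n.+2 ^ 2])%N -> ((n.+2 - r) ^ n.+1 = 1 %[mod n.+2 ^ 2])%N -> False.
Proof.
set p := n.+2 => pp op rb H1 H2.
have p1 : (1 < p)%N by [].
have p21 : (1 < p ^ 2)%N by rewrite -mulnn (leq_trans p1) // leq_pmulr // ltnW.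
have on : odd n by move: op; rewrite /p /= negbK.
move/(modZ _ _ p21): H1; rewrite natrX => H1.
move/(modZ _ _ p21): H2; rewrite natrX natrB; last by case/andP: rb => _ /ltnW.
rewrite addrC -[X in - _ + X]mulr1 binom_sq ?PP0 //.
rewrite exprNn -signr_odd /= on /= expr0 mul1r H1.
rewrite exprN_odd // => /eqP; rewrite -subr_eq0 addrAC subrr add0r => /eqP; rewrite mulr1 mulrN mulNrn => /eqP.
rewrite oppr_eq0 => /eqP.
rewrite -natrX -natrM -mulrnA => /(modZ0 _ p21).
rewrite -mulnA -mulnn dvdn_pmul2l // Euclid_dvdM // Euclid_dvdX //.
rewrite (negbTE (notdvd_small _)) // (negbTE (notdvd_small (a := n.+1) _)) //. by rewrite /p ltnSn.
Qed.

Lemma C2 n r s : prime n.+2 -> odd n.+2 -> (0 < r < n.+2)%N -> (0 < s < n.+2)%N ->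
  ((s + r ^ 2) %% n.+2 = 0)%N ->
  (r ^ n.+1 = 1 %[mod n.+2 ^ 2])%N -> (s ^ n.+1 = 1 %[mod n.+2 ^ 2])%N -> False.
Proof.
set p := n.+2 => pp op rb sb Hs H1 H2.
have p1 : (1 < p)%N by [].
have p21 : (1 < p ^ 2)%N by rewrite -mulnn (leq_trans p1) // leq_pmulr // ltnW.
have on : odd n by move: op; rewrite /p /= negbK.
set k := ((s + r ^ 2) %/ p)%N.
have Ek : (s + r ^ 2 = k * p)%N by rewrite {1}(divn_eq (s + r ^ 2) p) Hs addn0.
have kb : (0 < k < p)%N.
  case/andP: sb => s0 sp; case/andP: rb => r0 rp.
  apply/andP; split.
    have : (0 < s + r ^ 2)%N by rewrite addn_gt0 s0.
    by rewrite Ek muln_gt0 => /andP [].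
  rewrite -(ltn_pmul2r (prime_gt0 pp)) -Ek.
  apply: (@leq_trans (n.+1 + n.+1 * n.+1).+1).
    by rewrite ltnS leq_add // -mulnn leq_mul.
  by rewrite -mulnS /p ltn_pmul2r.
have ES : (s%:R : 'Z_(p ^ 2)) = - (r%:R) ^+ 2 + p%:R * k%:R.
  have := congr1 (fun x => (x%:R : 'Z_(p ^ 2))) Ek; rewrite /= natrD natrX natrM => E.
  by rewrite -[s%:R](addrK ((r%:R) ^+ 2)) E addrC mulrC.
move/(modZ _ _ p21): H1; rewrite natrX => H1.
move/(modZ _ _ p21): H2; rewrite natrX ES binom_sq ?PP0 //.
rewrite exprNn -signr_odd /= on /= expr0 mul1r exprAC H1 expr1n.
rewrite exprN_odd // => /eqP; rewrite -subr_eq0 addrAC subrr add0r => /eqP.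
rewrite mulrN mulNrn => /eqP; rewrite oppr_eq0 => /eqP.
rewrite -!natrX -!natrM -mulrnA => /(modZ0 _ p21).
rewrite -!mulnA -mulnn dvdn_pmul2l // !Euclid_dvdM // !Euclid_dvdX //.
rewrite (negbTE (notdvd_small kb)) (negbTE (notdvd_small rb)).
by rewrite (negbTE (notdvd_small (a := n.+1) _)) // /p ltnSn.
Qed.

Close Scope ring_scope.

Theorem mainTheorem12 (p r : nat) :
  prime p -> odd p -> 2 <= r <= p.-1 -> primitive_root p r ->
  (p %% 4 = 1 -> primitive_root (p ^ 2) r \/ primitive_root (p ^ 2) (p - r)) /\
  (p %% 4 = 3 -> forall s : nat, 1 <= s <= p.-1 ->
     (s + r ^ 2) %% p = 0 ->
     primitive_root (p ^ 2) r \/ primitive_root (p ^ 2) s).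
Proof.
move=> pp; move: (prime_gt1 pp).
case: p pp => [|[|n]] // pp _ op /andP [r2 rp] prim.
have rb : 0 < r < n.+2 by rewrite (leq_trans _ r2) //= ltnS.
split.
  move=> H4.
  have [h|h] := eqVneq (r ^ n.+1 %% n.+2 ^ 2) (1 %% n.+2 ^ 2).
    right; apply: liftA => //; first exact: B1.
    by move=> h2; apply: (C1 pp op rb h h2).
  by left; apply: liftA => // h2; move: h; rewrite h2 eqxx.
move=> H4 s /andP [s1 sp] Hs.
have sb : 0 < s < n.+2 by rewrite s1 ltnS.
have [h|h] := eqVneq (r ^ n.+1 %% n.+2 ^ 2) (1 %% n.+2 ^ 2).
  right; apply: liftA => //; first exact: (B2 pp H4 prim sb Hs).
  by move=> h2; apply: (C2 pp op rb sb Hs h h2).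
by left; apply: liftA => // h2; move: h; rewrite h2 eqxx.
Qed.
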